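(* For an ensemble $\mathcal{E}=\{\eta_{i},\rho_{i}\}_{i\in\mathbb{N}_{n}}$ and $x\in\mathbb{N}_{n}$, $$\mathbb{M}_{x}(\mathcal{E})=\{E\in\mathbb{H}_{+}\mid E\,\Pi_{x}(\mathcal{E})=\mathbb{O}\},\qquad \mathbb{M}_{x}^{*}(\mathcal{E})=\{E\in\mathbb{H}\mid \Pi_{x}^{\bot}(\mathcal{E})E\Pi_{x}^{\bot}(\mathcal{E})\in\mathbb{H}_{+}\},$$ where $\Pi_{x}(\mathcal{E})$ and $\Pi_{x}^{\bot}(\mathcal{E})$ are the orthogonal projections onto the support and the kernel of $\mathcal{C}_{x}(\mathcal{E})\rho_{0}-\eta_{x}\rho_{x}$, respectively, and $\mathbb{O}$ is the zero operator.
   Context: $\mathbb{N}_{n}=\{1,\ldots,n\}$. $\mathcal{H}$ is a finite-dimensional complex Hilbert space, $\mathbb{H}$ the Hermitian operators on it, $\mathbb{H}_{+}$ the positive-semidefinite ones. An ensemble $\{\eta_{i},\rho_{i}\}_{i\in\mathbb{N}_{n}}$: density operators $\rho_i$ with probabilities $\eta_i>0$ summing to $1$; $\rho_0=\sum_i\eta_i\rho_i$. A measurement is $\{M_{?}\}\cup\{M_{i}\}_{i\in\mathbb{N}_{n}}\subseteq\mathbb{H}_+$ summing to the identity. $\mathcal{C}_{x}(\mathcal{E})$ is the maximum of $\eta_{x}\Tr(\rho_{x}M_{x})/\Tr(\rho_{0}M_{x})$ over measurements with $\Tr(\rho_{0}M_{x})>0$. $\mathbb{M}_{x}(\mathcal{E})=\{E\in\mathbb{H}_{+}\mid\Tr[(\mathcal{C}_{x}(\mathcal{E})\rho_{0}-\eta_{x}\rho_{x})E]=0\}$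 and $\mathbb{M}_{x}^{*}(\mathcal{E})=\{E\in\mathbb{H}\mid\Tr(EF)\ge0\ \forall F\in\mathbb{M}_{x}(\mathcal{E})\}$. *)

(* Defs.v *)
(* Operators on a d-dimensional complex Hilbert space are
   represented as d x d matrices over an algebraically closed numeric field C
   (e.g. algC), with the standard inner product. *)
From HB Require Import structures.
From mathcomp Require Import all_boot all_order all_algebra.
Set Implicit Arguments. Unset Strict Implicit. Unset Printing Implicit Defensive.
Import Order.TTheory GRing.Theory Num.Theory.
Local Open Scope ring_scope.

Section QDefs.
Variable C : numClosedFieldType.
Variable d : nat.

Definition adj (A : 'M[C]_d) : 'M[C]_d := (map_mx Num.conj A)^T.

Definition is_herm (A : 'M[C]_d) : Prop := adj A = A.

Definition is_psd (A : 'M[C]_d) : Prop :=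
  is_herm A /\ forall v : 'rV[C]_d, 0 <= (v *m A *m (map_mx Num.conj v)^T) 0 0.

Definition density (rho : 'M[C]_d) : Prop := is_psd rho /\ \tr rho = 1.

(* ensemble {eta_i, rho_i}_{i in N_n} (indices 'I_n stand for N_n) *)
Definition ensemble n (eta : 'I_n -> C) (rho : 'I_n -> 'M[C]_d) : Prop :=
  (forall i, 0 < eta i) /\ \sum_(i < n) eta i = 1 /\ (forall i, density (rho i)).

Definition rho0 n (eta : 'I_n -> C) (rho : 'I_n -> 'M[C]_d) : 'M[C]_d :=
  \sum_(i < n) eta i *: rho i.

Definition measurement n (Mq : 'M[C]_d) (M : 'I_n -> 'M[C]_d) : Prop :=
  is_psd Mq /\ (forall i, is_psd (M i)) /\ Mq + \sum_(i < n) M i = 1%:M.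

Definition ratio_x n (eta : 'I_n -> C) (rho : 'I_n -> 'M[C]_d) (x : 'I_n)
  (M : 'I_n -> 'M[C]_d) : C :=
  eta x * \tr (rho x *m M x) / \tr (rho0 eta rho *m M x).

(* c is C_x(E): the maximum of eta_x Tr(rho_x M_x)/Tr(rho_0 M_x) over
   measurements with Tr(rho_0 M_x) > 0 (attained, and an upper bound). *)
Definition is_Cx n (eta : 'I_n -> C) (rho : 'I_n -> 'M[C]_d) (x : 'I_n) (c : C)
  : Prop :=
  (exists Mq M, measurement Mq M /\ 0 < \tr (rho0 eta rho *m M x)
                /\ ratio_x eta rho x M = c) /\
  (forall Mq M, measurement Mq M -> 0 < \tr (rho0 eta rho *m M x) ->
                ratio_x eta rho x M <= c).

Definition Dx n (eta : 'I_n -> C) (rho : 'I_n -> 'M[C]_d) (x : 'I_n) (c : C)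
  : 'M[C]_d := c *: rho0 eta rho - eta x *: rho x.

Definition Mset n (eta : 'I_n -> C) (rho : 'I_n -> 'M[C]_d) (x : 'I_n) (c : C)
  (E : 'M[C]_d) : Prop :=
  is_psd E /\ \tr (Dx eta rho x c *m E) = 0.

Definition Mstar n (eta : 'I_n -> C) (rho : 'I_n -> 'M[C]_d) (x : 'I_n) (c : C)
  (E : 'M[C]_d) : Prop :=
  is_herm E /\ forall F, Mset eta rho x c F -> 0 <= \tr (E *m F).

Definition orth_proj (P : 'M[C]_d) : Prop := is_herm P /\ P *m P = P.

(* P is the orthogonal projection onto the support (range) of A.
   Matrices act on row vectors here, so the range of A is its row space;
   for Hermitian A this coincides with the column space. *)
Definition supp_proj (A P : 'M[C]_d) : Prop :=
  orth_proj P /\ (P :=: A)%MS.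

Definition ker_proj (A P : 'M[C]_d) : Prop :=
  orth_proj P /\ (P :=: kermx A)%MS.

End QDefs.

(* Main.v *)
Require Import Defs.
From HB Require Import structures.
From mathcomp Require Import all_boot all_order all_algebra.
From mathcomp Require Import ring.
Import Order.TTheory GRing.Theory Num.Theory.
Local Open Scope ring_scope.
Set Implicit Arguments. Unset Strict Implicit. Unset Printing Implicit Defensive.

Section Aux.
Variable C : numClosedFieldType.

Definition ct m n (A : 'M[C]_(m,n)) : 'M[C]_(n,m) := (map_mx Num.conj A)^T.

Lemma ctM m n p (A : 'M[C]_(m,n)) (B : 'M[C]_(n,p)) : ct (A *m B) = ct B *m ct A.
Proof. by rewrite /ct map_mxM trmx_mul. Qed.

Lemma ctK m n (A : 'M[C]_(m,n)) : ct (ct A) = A.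
Proof. by apply/matrixP => i j; rewrite !mxE conjCK. Qed.

Lemma ctD m n (A B : 'M[C]_(m,n)) : ct (A + B) = ct A + ct B.
Proof. by apply/matrixP => i j; rewrite !mxE rmorphD. Qed.

Lemma ctN m n (A : 'M[C]_(m,n)) : ct (- A) = - ct A.
Proof. by apply/matrixP => i j; rewrite !mxE rmorphN. Qed.

Lemma ctB m n (A B : 'M[C]_(m,n)) : ct (A - B) = ct A - ct B.
Proof. by rewrite ctD ctN. Qed.

Lemma ctZ m n a (A : 'M[C]_(m,n)) : ct (a *: A) = a^* *: ct A.
Proof. by apply/matrixP => i j; rewrite !mxE rmorphM. Qed.

Lemma ct0 m n : ct (0 : 'M[C]_(m,n)) = 0.
Proof. by apply/matrixP => i j; rewrite !mxE rmorph0. Qed.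

Lemma ct1 n : ct (1%:M : 'M[C]_n) = 1%:M.
Proof. by apply/matrixP => i j; rewrite !mxE rmorph_nat eq_sym. Qed.

Lemma ct_sum m n I (r : seq I) (P : pred I) (F : I -> 'M[C]_(m,n)) :
  ct (\sum_(i <- r | P i) F i) = \sum_(i <- r | P i) ct (F i).
Proof.
elim/big_rec2: _ => [|i A B _ <-]; first by rewrite ct0.
by rewrite ctD.
Qed.

Lemma ct_tstar m n (A : 'M[C]_(m,n)) : ct A = (A ^t Num.conj)%sesqui.
Proof. by rewrite /ct map_trmx. Qed.

Lemma dot_ge0 k (u : 'rV[C]_k) : 0 <= (u *m ct u) 0 0.
Proof.
have [->|nz] := eqVneq u 0; first by rewrite mul0mx mxE.
by rewrite ct_tstar -dotmxE ltW // dotmx_is_dotmx.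
Qed.

Lemma dot_eq0 k (u : 'rV[C]_k) : (u *m ct u) 0 0 = 0 -> u = 0.
Proof.
move=> h; have [//|nz] := eqVneq u 0.
by move: (dotmx_is_dotmx nz); rewrite dotmxE -ct_tstar h ltxx.
Qed.

Definition qf k (v : 'rV[C]_k) (A : 'M[C]_k) := (v *m A *m ct v) 0 0.

Lemma qf_row k (Y X : 'M[C]_k) i : qf (row i Y) X = (Y *m X *m ct Y) i i.
Proof.
rewrite /qf -row_mul !mxE; apply: eq_bigr => j _; rewrite !mxE.
by [].
Qed.


Lemma psd_factor k (A : 'M[C]_k) : is_psd A -> exists L : 'M[C]_k, A = ct L *m L.
Proof.
case=> hA hq.
have hA' : ct A = A := hA.
have nA : A \is normalmx by apply/normalmxP; rewrite -ct_tstar hA'.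
have /orthomx_spectralP eA := nA.
set P := spectralmx A in eA; set s := spectral_diag A in eA.
have Pu : P \is unitarymx := spectral_unitarymx A.
rewrite invmx_unitary // -ct_tstar in eA.
have PP : P *m ct P = 1%:M by rewrite ct_tstar; apply/unitarymxP.
have s_ge0 : forall j, 0 <= s 0 j.
  move=> j; have := hq (row j P); change (0 <= qf (row j P) A -> 0 <= s 0 j).
  rewrite qf_row {1}eA !mulmxA PP mul1mx -mulmxA PP mulmx1 mxE eqxx mulr1n.
  by [].
exists (diag_mx (\row_j sqrtC (s 0 j)) *m P).
have cd : ct (diag_mx (\row_j sqrtC (s 0 j))) = diag_mx (\row_j sqrtC (s 0 j)).
  apply/matrixP => i j; rewrite !mxE raddfMn /= geC0_conj ?sqrtC_ge0 //.
  by have [->|ne] := eqVneq j i; rewrite ?eqxx // !mulr0n.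
rewrite ctM cd {1}eA !mulmxA -[ct P *m _ *m _]mulmxA mulmx_diag.
congr (_ *m _ *m _); congr diag_mx; apply/rowP => j; rewrite !mxE -expr2 sqrtCK.
by [].
Qed.

Lemma psd_kernel k (A : 'M[C]_k) v : is_psd A -> qf v A = 0 -> v *m A = 0.
Proof.
move=> /psd_factor [L ->]; rewrite /qf !mulmxA -mulmxA.
have -> : L *m ct v = ct (v *m ct L) by rewrite ctM ctK.
by move=> /dot_eq0 ->; rewrite mul0mx.
Qed.

Lemma psd_qf k (A : 'M[C]_k) v : is_psd A -> 0 <= qf v A.
Proof. by case=> _; apply. Qed.

Lemma psd_herm k (A : 'M[C]_k) : is_psd A -> ct A = A.
Proof. by case. Qed.

Lemma tr_psd k (A B : 'M[C]_k) : is_psd A -> is_psd B ->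
  0 <= \tr (A *m B) /\ (\tr (A *m B) = 0 -> A *m B = 0).
Proof.
move=> pA pB; have [L eB] := psd_factor pB.
have e : \tr (A *m B) = \sum_i qf (row i L) A.
  rewrite eB mulmxA mxtrace_mulC mulmxA /mxtrace; apply: eq_bigr => i _.
  by rewrite qf_row.
have ge : forall i, 0 <= qf (row i L) A by move=> i; apply: psd_qf.
split; first by rewrite e sumr_ge0.
rewrite e => /psumr_eq0P h.
have LA : L *m A = 0.
  apply/row_matrixP => i; rewrite row_mul row0; apply: psd_kernel => //.
  by apply: h.
have BA : B *m A = 0 by rewrite eB -mulmxA LA mulmx0.
by rewrite -(psd_herm pA) -(psd_herm pB) -ctM BA ct0.
Qed.


Lemma qfD k (v : 'rV[C]_k) A B : qf v (A + B) = qf v A + qf v B.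
Proof. by rewrite /qf mulmxDr mulmxDl mxE. Qed.

Lemma qfN k (v : 'rV[C]_k) A : qf v (- A) = - qf v A.
Proof. by rewrite /qf mulmxN mulNmx mxE. Qed.

Lemma qfB k (v : 'rV[C]_k) A B : qf v (A - B) = qf v A - qf v B.
Proof. by rewrite qfD qfN. Qed.

Lemma qfZ k (v : 'rV[C]_k) a A : qf v (a *: A) = a * qf v A.
Proof. by rewrite /qf -scalemxAr -scalemxAl mxE. Qed.

Lemma qf_sum k (v : 'rV[C]_k) I (r : seq I) (P : pred I) (F : I -> 'M[C]_k) :
  qf v (\sum_(i <- r | P i) F i) = \sum_(i <- r | P i) qf v (F i).
Proof.
elim/big_rec2: _ => [|i A B _ <-]; first by rewrite /qf mulmx0 mul0mx mxE.
by rewrite qfD.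
Qed.

Lemma qf0v k (A : 'M[C]_k) : qf 0 A = 0.
Proof. by rewrite /qf !mul0mx mxE. Qed.

Lemma qf1 k (v : 'rV[C]_k) : qf v 1%:M = (v *m ct v) 0 0.
Proof. by rewrite /qf mulmx1. Qed.

Lemma tr_rank1 k (A : 'M[C]_k) v : \tr (A *m (ct v *m v)) = qf v A.
Proof. by rewrite mulmxA mxtrace_mulC mulmxA trace_mx11. Qed.

Lemma mx11M (X Y : 'M[C]_1) : (X *m Y) 0 0 = X 0 0 * Y 0 0.
Proof. by rewrite mxE big_ord1. Qed.

Lemma qf_rank1 k (u w : 'rV[C]_k) : qf u (ct w *m w) = `|(u *m ct w) 0 0| ^+ 2.
Proof.
rewrite /qf !mulmxA -(mulmxA (u *m ct w)) mx11M normCK; congr (_ * _).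
have -> : w *m ct u = ct (u *m ct w) by rewrite ctM ctK.
by rewrite /ct !mxE.
Qed.

Lemma psd_rank1 k (w : 'rV[C]_k) : is_psd (ct w *m w).
Proof.
split; first by change (ct (ct w *m w) = ct w *m w); rewrite ctM ctK.
move=> u; change (0 <= qf u (ct w *m w)); rewrite qf_rank1.
by rewrite exprn_ge0 ?normr_ge0.
Qed.

Lemma psdZ k a (A : 'M[C]_k) : 0 <= a -> is_psd A -> is_psd (a *: A).
Proof.
move=> a0 pA; split.
  by change (ct (a *: A) = a *: A); rewrite ctZ geC0_conj // psd_herm.
by move=> u; change (0 <= qf u (a *: A)); rewrite qfZ mulr_ge0 // psd_qf.
Qed.

Lemma psd0 k : is_psd (0 : 'M[C]_k).
Proof.
split; first by change (ct (0 : 'M[C]_k) = 0); rewrite ct0.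
by move=> u; change (0 <= qf u 0); rewrite /qf mulmx0 mul0mx mxE.
Qed.


Lemma psd_proj1 k (v : 'rV[C]_k) : 0 < (v *m ct v) 0 0 ->
  is_psd (1%:M - ((v *m ct v) 0 0)^-1 *: (ct v *m v)).
Proof.
move=> nv0; split.
  change (ct (1%:M - ((v *m ct v) 0 0)^-1 *: (ct v *m v)) =
     1%:M - ((v *m ct v) 0 0)^-1 *: (ct v *m v)).
  by rewrite ctB ct1 ctZ ctM ctK geC0_conj // invr_ge0 ltW.
move=> u; change (0 <= qf u (1%:M - ((v *m ct v) 0 0)^-1 *: (ct v *m v))).
rewrite qfB qf1 qfZ qf_rank1.
have cs : `|dotmx u v| ^+ 2 <= dotmx u u * dotmx v v :=
  (CauchySchwarz (@dotmx C k) u v).1.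
rewrite !dotmxE -!ct_tstar in cs.
by rewrite subr_ge0 mulrC ler_pdivrMr.
Qed.

End Aux.

Lemma meas_build (C : numClosedFieldType) d n (x : 'I_n) (F : 'M[C]_d) :
  is_psd F -> is_psd (1%:M - F) ->
  measurement (1%:M - F) (fun i => if i == x then F else 0).
Proof.
move=> pF pQ; split => //; split.
  by move=> i; case: (i == x) => //; apply: psd0.
rewrite (bigD1 x) //= eqxx big1 ?addr0 ?subrK // => i /negPf ->.
by [].
Qed.

Theorem lemma2 (C : numClosedFieldType) (d n : nat)
  (eta : 'I_n -> C) (rho : 'I_n -> 'M[C]_d) (x : 'I_n) (c : C)
  (Pi Piperp : 'M[C]_d) :
  ensemble eta rho ->
  is_Cx eta rho x c ->
  supp_proj (Dx eta rho x c) Pi ->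
  ker_proj (Dx eta rho x c) Piperp ->
  (forall E : 'M[C]_d, Mset eta rho x c E <-> (is_psd E /\ E *m Pi = 0)) /\
  (forall E : 'M[C]_d,
     Mstar eta rho x c E <-> (is_herm E /\ is_psd (Piperp *m E *m Piperp))).
Proof.
move=> [eta_pos [_ rho_dens]] [[Mq0 [M0 [meas0 [pos0 ratio0]]]] cmax].
move=> [[PiH PiI] PiD] [[PpH PpI] PpK].
have PiH' : ct Pi = Pi := PiH.
have PpH' : ct Piperp = Piperp := PpH.
have prho : forall i, is_psd (rho i) by move=> i; case: (rho_dens i).
set D := Dx eta rho x c in PiD PpK *.
set R0 := rho0 eta rho.
have c_ge0 : 0 <= c.
  rewrite -ratio0 /ratio_x.
  case: meas0 => _ [pM _].
  have [t1 _] := tr_psd (prho x) (pM x).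
  by apply: divr_ge0; [apply: mulr_ge0; [apply: ltW|] | apply: ltW].
have R0H : ct R0 = R0.
  rewrite /R0 /rho0 ct_sum; apply: eq_bigr => i _.
  by rewrite ctZ geC0_conj ?ltW // psd_herm.
have DH : ct D = D.
  by rewrite /D /Dx -/R0 ctB !ctZ (geC0_conj c_ge0) (geC0_conj (ltW (eta_pos x))) R0H (psd_herm (prho x)).
have qD : forall v, qf v D = c * qf v R0 - eta x * qf v (rho x).
  by move=> v; rewrite /D /Dx -/R0 qfB !qfZ.
have qR0 : forall v, qf v R0 = \sum_i eta i * qf v (rho i).
  by move=> v; rewrite /R0 /rho0 qf_sum; apply: eq_bigr => i _; rewrite qfZ.
have pD : is_psd D.
  split => //; move=> v; change (0 <= qf v D); rewrite qD.
  have qx0 : 0 <= eta x * qf v (rho x) by rewrite mulr_ge0 ?(ltW (eta_pos x)) ?psd_qf.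
  have Sge : eta x * qf v (rho x) <= qf v R0.
    rewrite qR0 (bigD1 x) //= lerDl sumr_ge0 // => i _.
    by rewrite mulr_ge0 ?(ltW (eta_pos i)) ?psd_qf.
  have [S0|Snz] := eqVneq (qf v R0) 0.
    have e0 : eta x * qf v (rho x) = 0 by apply/le_anti; rewrite qx0 -S0 Sge.
    by rewrite S0 e0 mulr0 subrr.
  have Spos : 0 < qf v R0 by rewrite lt0r Snz (le_trans qx0 Sge).
  have vnz : v != 0 by apply: contraNneq Snz => ->; rewrite qf0v.
  have nvpos : 0 < (v *m ct v) 0 0.
    rewrite lt0r dot_ge0 andbT; apply: contraNneq vnz => h.
    by rewrite (dot_eq0 h).
  set nv := (v *m ct v) 0 0 in nvpos.
  have pF : is_psd (nv^-1 *: (ct v *m v)).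
    by apply: psdZ; [rewrite invr_ge0 ltW | apply: psd_rank1].
  have meas := meas_build x pF (psd_proj1 nvpos).
  have trpos : 0 < \tr (R0 *m (nv^-1 *: (ct v *m v))).
    by rewrite -scalemxAr mxtraceZ tr_rank1 mulr_gt0 // invr_gt0.
  have := cmax _ _ meas; rewrite /ratio_x eqxx; move=> /(_ trpos).
  rewrite -!scalemxAr !mxtraceZ !tr_rank1 -/R0.
  have -> : eta x * (nv^-1 * qf v (rho x)) / (nv^-1 * qf v R0) =
            eta x * qf v (rho x) / qf v R0.
    by field; rewrite Snz (gt_eqF nvpos).
  by rewrite (ler_pdivrMr _ _ Spos) subr_ge0 mulrC.
have [X eX] : exists X, Pi = X *m D by apply/submxP; rewrite PiD.
have [Y eY] : exists Y, D = Y *m Pi by apply/submxP; rewrite PiD.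
have eX' : Pi = D *m ct X by rewrite -PiH' eX ctM DH.
have eY' : D = Pi *m ct Y by rewrite -DH eY ctM PiH'.
have part1 : forall E : 'M[C]_d, Mset eta rho x c E <-> (is_psd E /\ E *m Pi = 0).
  move=> E; split.
    move=> [pE trE]; split => //.
    have [_ h] := tr_psd pD pE.
    have DE := h trE.
    have ED : E *m D = 0 by rewrite -(psd_herm pE) -DH -ctM DE ct0.
    by rewrite eX' mulmxA ED mul0mx.
  move=> [pE EPi]; split => //.
  have ED : E *m D = 0 by rewrite eY' mulmxA EPi mul0mx.
  have DE : D *m E = 0 by rewrite -(psd_herm pE) -DH -ctM ED ct0.
  by rewrite DE mxtrace0.
split => //.
have PpD : Piperp *m D = 0 by apply/sub_kermxP; rewrite PpK.
have PpPi : Piperp *m Pi = 0 by rewrite eX' mulmxA PpD mul0mx.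
have PiPp : Pi *m Piperp = 0 by rewrite -PiH' -PpH' -ctM PpPi ct0.
have PiDD : Pi *m D = D by rewrite {2}eY' {1}eY' mulmxA PiI.
have sum1 : Pi + Piperp = 1%:M.
  set Q := 1%:M - Pi - Piperp.
  have QD : Q *m D = 0 by rewrite /Q !mulmxBl mul1mx PiDD PpD subrr subr0.
  have [R eR] : exists R, Q = R *m Piperp.
    by apply/submxP; rewrite PpK; apply/sub_kermxP.
  have QP : Q *m Piperp = 0 by rewrite /Q !mulmxBl mul1mx PiPp PpI subr0 subrr.
  have QPi : Q *m Pi = 0 by rewrite /Q !mulmxBl mul1mx PpPi PiI subr0 subrr.
  have QH : ct Q = Q by rewrite /Q !ctB ct1 PiH' PpH'.
  have QQ : Q *m Q = Q by rewrite {2}/Q !mulmxBr mulmx1 QPi QP !subr0.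
  have Q0 : Q = 0 by rewrite -QQ {2}(_ : Q = Piperp *m ct R) ?mulmxA ?QP ?mul0mx // -QH eR ctM PpH'.
  by apply/eqP; rewrite eq_sym -subr_eq0 opprD addrA; apply/eqP.
move=> E; split.
  move=> [hE hF]; split => //.
  have hE' : ct E = E := hE.
  split.
    by change (ct (Piperp *m E *m Piperp) = Piperp *m E *m Piperp); rewrite !ctM hE' PpH' mulmxA.
  move=> v; change (0 <= qf v (Piperp *m E *m Piperp)).
  set w := v *m Piperp.
  have pF := psd_rank1 w.
  have FPi : (ct w *m w) *m Pi = 0 by rewrite /w -mulmxA -mulmxA PpPi !mulmx0.
  have := hF _ (proj2 (part1 _) (conj pF FPi)).
  rewrite tr_rank1 /w /qf ctM PpH' !mulmxA.
  by [].
move=> [hE pPEP]; split => //.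
move=> F /part1 [pF FPi].
have FPp : F *m Piperp = F by rewrite -{2}(mulmx1 F) -sum1 mulmxDr FPi add0r.
have PpF : Piperp *m F = F by rewrite -PpH' -{1}(psd_herm pF) -ctM FPp (psd_herm pF).
have eF : F = Piperp *m F *m Piperp by rewrite PpF FPp.
rewrite eF mulmxA mxtrace_mulC !mulmxA.
by have [] := tr_psd pPEP pF.
Qed.
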